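(* Let $\mathcal C$ be a class of topological semigroups with $\mathsf{T_{z}S}\subseteq\mathcal C\subseteq\mathsf{T_{1}S}$. A semigroup $X$ is $\mathcal C$-closed if $X$ admits a semigroup homomorphism $h:X\to E$ to a chain-finite semilattice $E$ such that for every $e\in E$ the subsemigroup $h^{-1}(e)$ is $\mathcal C$-closed.
   Context: A topological semigroup is a topological space with a continuous associative binary operation. $\mathsf{T_{1}S}$ denotes the class of topological semigroups satisfying the $T_1$ separation axiom (finite sets are closed); $\mathsf{T_{z}S}$ denotes the class of Hausdorff zero-dimensional (having a base of clopen sets) topological semigroups. A topological semigroup $X$ is $\mathcal C$-closed if for every isomorphic topological embedding $h:X\to Y$ into a topological semigroup $Y\in\mathcal C$ the image $h[X]$ is closed in $Y$; a (plain) semigroup is $\mathcal C$-closed if it is $\mathcal C$-closed when endowed with the discrete topology. A semilattice is a commutative semigroup in which every element is idempotent. A subset $C$ of a semigroup is a chain if $xy\in\{x,y\}$ for all $x,y\in C$; a semigroup is chain-finite if it contains no infinite chains. *)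

(* Defs.v *)
From Stdlib Require Import List ProofIrrelevance.

Record Semigroup := {
  sg_carrier :> Type;
  sg_mul : sg_carrier -> sg_carrier -> sg_carrier;
  sg_assoc : forall x y z, sg_mul x (sg_mul y z) = sg_mul (sg_mul x y) z
}.

Definition is_topology (X : Type) (opn : (X -> Prop) -> Prop) : Prop :=
  opn (fun _ => True) /\
  (forall (I : Type) (U : I -> X -> Prop),
      (forall i, opn (U i)) -> opn (fun x => exists i, U i x)) /\
  (forall U V, opn U -> opn V -> opn (fun x => U x /\ V x)).

(* A topological semigroup: a topological space with a continuous associative
   operation; continuity of mul : X x X -> X (product topology) is written out:
   every neighbourhood W of x*y contains U*V for open neighbourhoods U of x and
   V of y. *)
Record TopSemigroup := {
  ts_carrier :> Type;
  ts_open : (ts_carrier -> Prop) -> Prop;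
  ts_mul : ts_carrier -> ts_carrier -> ts_carrier;
  ts_topology : is_topology ts_carrier ts_open;
  ts_assoc : forall x y z, ts_mul x (ts_mul y z) = ts_mul (ts_mul x y) z;
  ts_mul_cont : forall x y (W : ts_carrier -> Prop), ts_open W -> W (ts_mul x y) ->
     exists U V : ts_carrier -> Prop, ts_open U /\ ts_open V /\ U x /\ V y /\
       (forall a b, U a -> V b -> W (ts_mul a b))
}.

Definition ts_closed (Y : TopSemigroup) (F : Y -> Prop) : Prop :=
  ts_open Y (fun y => ~ F y).

Definition is_T1 (Y : TopSemigroup) : Prop :=
  forall l : list Y, ts_closed Y (fun y => In y l).

Definition is_Hausdorff (Y : TopSemigroup) : Prop :=
  forall x y : Y, x <> y -> exists U V, ts_open Y U /\ ts_open Y V /\ U x /\ V y /\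
     (forall z, U z -> V z -> False).

Definition is_zero_dim (Y : TopSemigroup) : Prop :=
  forall (U : Y -> Prop) (x : Y), ts_open Y U -> U x ->
    exists V : Y -> Prop, ts_open Y V /\ ts_closed Y V /\ V x /\ (forall z, V z -> U z).

Definition in_T1S (Y : TopSemigroup) : Prop := is_T1 Y.
Definition in_TzS (Y : TopSemigroup) : Prop := is_Hausdorff Y /\ is_zero_dim Y.

(* isomorphic topological embedding: injective continuous homomorphism that is a
   homeomorphism onto its image (with the subspace topology) *)
Definition ts_embedding (X Y : TopSemigroup) (h : X -> Y) : Prop :=
  (forall x y, h (ts_mul X x y) = ts_mul Y (h x) (h y)) /\
  (forall x y, h x = h y -> x = y) /\
  (forall V, ts_open Y V -> ts_open X (fun x => V (h x))) /\
  (forall U, ts_open X U -> exists V, ts_open Y V /\ forall x, U x <-> V (h x)).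

Definition C_closed (C : TopSemigroup -> Prop) (X : TopSemigroup) : Prop :=
  forall (Y : TopSemigroup), C Y -> forall h : X -> Y, ts_embedding X Y h ->
    ts_closed Y (fun y => exists x, h x = y).

Definition discrete_ts (S : Semigroup) : TopSemigroup.
Proof.
  refine {| ts_carrier := S; ts_open := fun _ => True; ts_mul := sg_mul S |}.
  - repeat split; auto.
  - exact (sg_assoc S).
  - intros x y W _ HW. exists (fun a => a = x), (fun b => b = y).
    repeat split; auto. intros a b -> ->. exact HW.
Defined.

Definition sg_C_closed (C : TopSemigroup -> Prop) (S : Semigroup) : Prop :=
  C_closed C (discrete_ts S).

Definition is_semilattice (E : Semigroup) : Prop :=
  (forall x y : E, sg_mul E x y = sg_mul E y x) /\ (forall x : E, sg_mul E x x = x).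

Definition is_chain (E : Semigroup) (Ch : E -> Prop) : Prop :=
  forall x y, Ch x -> Ch y -> sg_mul E x y = x \/ sg_mul E x y = y.

Definition is_finite_set (T : Type) (A : T -> Prop) : Prop :=
  exists l : list T, forall x, A x -> In x l.

Definition chain_finite (E : Semigroup) : Prop :=
  forall Ch, is_chain E Ch -> is_finite_set E Ch.

Definition sg_hom (X E : Semigroup) (h : X -> E) : Prop :=
  forall x y, h (sg_mul X x y) = sg_mul E (h x) (h y).

Definition preimage_sg (X E : Semigroup) (h : X -> E) (hh : sg_hom X E h)
  (e : E) (he : sg_mul E e e = e) : Semigroup.
Proof.
  refine {| sg_carrier := {x : X | h x = e};
            sg_mul := fun a b => exist (fun x => h x = e)
               (sg_mul X (proj1_sig a) (proj1_sig b))
               (eq_trans (hh _ _) (eq_trans (f_equal2 (sg_mul E) (proj2_sig a) (proj2_sig b)) he)) |}.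
  - intros [a Ha] [b Hb] [c Hc]. simpl.
    apply eq_sig_hprop.
    + intros x p q. apply proof_irrelevance.
    + simpl. apply sg_assoc.
Defined.

(* Main.v *)
Require Import Defs.
From Stdlib Require Import List ProofIrrelevance Classical ClassicalEpsilon
  FunctionalExtensionality PropExtensionality Arith Lia.

Definition sle (E : Semigroup) (a b : E) : Prop := sg_mul E a b = a.



Lemma sle_refl (E : Semigroup) (hE : is_semilattice E) (a : E) : sle E a a.
Proof. unfold sle. apply (proj2 hE). Qed.

Lemma sle_trans (E : Semigroup) (a b c : E) : sle E a b -> sle E b c -> sle E a c.
Proof.
  unfold sle; intros Hab Hbc. rewrite <- Hab at 1. rewrite <- sg_assoc.
  rewrite Hbc. exact Hab.
Qed.

Lemma sle_antisym (E : Semigroup) (hE : is_semilattice E) (a b : E) :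
  sle E a b -> sle E b a -> a = b.
Proof.
  unfold sle; intros H1 H2. rewrite <- H1. rewrite (proj1 hE). exact H2.
Qed.

Lemma sle_mul_l (E : Semigroup) (hE : is_semilattice E) (a b : E) :
  sle E (sg_mul E a b) a.
Proof.
  unfold sle. rewrite <- sg_assoc. rewrite ((proj1 hE) b a). rewrite sg_assoc.
  rewrite (proj2 hE). reflexivity.
Qed.

Lemma sle_mul_r (E : Semigroup) (hE : is_semilattice E) (a b : E) :
  sle E (sg_mul E a b) b.
Proof.
  unfold sle. rewrite <- sg_assoc. rewrite (proj2 hE). reflexivity.
Qed.

Lemma sle_glb (E : Semigroup) (g x y : E) :
  sle E g x -> sle E g y -> sle E g (sg_mul E x y).
Proof.
  unfold sle; intros H1 H2. rewrite sg_assoc. rewrite H1. exact H2.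
Qed.

Lemma sle_mul_inv (E : Semigroup) (hE : is_semilattice E) (g c t : E) :
  sle E g (sg_mul E c t) -> sle E g t.
Proof.
  intros H. apply sle_trans with (sg_mul E c t); auto. apply sle_mul_r; auto.
Qed.

Lemma sle_self_mul (E : Semigroup) (hE : is_semilattice E) (c t : E) :
  sle E c (sg_mul E c t) -> sg_mul E c t = c.
Proof.
  intros H. apply sle_antisym; auto. apply sle_mul_l; auto.
Qed.

Lemma wf_of_noseq {T : Type} (R : T -> T -> Prop) :
  (forall x : nat -> T, (forall n, R (x (S n)) (x n)) -> False) -> well_founded R.
Proof.
  intros H a. apply NNPP. intro Hna.
  assert (step : forall z : {z | ~ Acc R z}, {w | ~ Acc R w /\ R w (proj1_sig z)}).
  { intros [z Hz]. apply constructive_indefinite_description. simpl.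
    apply NNPP; intro Hno. apply Hz. constructor. intros w Hw.
    apply NNPP. intro Hw'. apply Hno. exists w; auto. }
  pose (next := fun z : {z | ~ Acc R z} =>
     exist (fun w => ~ Acc R w) (proj1_sig (step z)) (proj1 (proj2_sig (step z)))).
  pose (sq := fun n => nat_rect (fun _ => {z | ~ Acc R z}) (exist _ a Hna) (fun _ z => next z) n).
  apply (H (fun n => proj1_sig (sq n))). intros n. simpl.
  exact (proj2 (proj2_sig (step (sq n)))).
Qed.

Lemma pigeon {T : Type} (x : nat -> T) (l : list T) :
  (forall n k, x n = x k -> n = k) -> (forall n, In (x n) l) -> False.
Proof.
  intros Hinj Hin.
  assert (HN : NoDup (map x (seq 0 (S (length l))))).
  { apply NoDup_map_NoDup_ForallPairs. intros a b _ _; apply Hinj. apply seq_NoDup. }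
  apply NoDup_incl_length with (l' := l) in HN.
  - rewrite length_map, length_seq in HN. lia.
  - intros z Hz. apply in_map_iff in Hz. destruct Hz as [n [<- _]]. apply Hin.
Qed.

Lemma comparable_seq_false (E : Semigroup) (hE : is_semilattice E) (hEf : chain_finite E)
  (x : nat -> E) :
  (forall n k, sle E (x n) (x k) \/ sle E (x k) (x n)) ->
  (forall n k, x n = x k -> n = k) -> False.
Proof.
  intros Hc Hinj.
  destruct (hEf (fun z => exists n, x n = z)) as [l Hl].
  - intros a b [n <-] [k <-]. destruct (Hc n k) as [H|H]; unfold sle in H.
    + left; exact H.
    + right. rewrite (proj1 hE). exact H.
  - apply (pigeon x l Hinj). intro n. apply Hl. exists n; reflexivity.
Qed.

Lemma wf_gen {T : Type} (le : T -> T -> Prop)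
  (refl : forall a, le a a)
  (trans : forall a b c, le a b -> le b c -> le a c)
  (antis : forall a b, le a b -> le b a -> a = b)
  (nofin : forall x : nat -> T, (forall n k, le (x n) (x k) \/ le (x k) (x n)) ->
           (forall n k, x n = x k -> n = k) -> False) :
  well_founded (fun a b => le a b /\ a <> b).
Proof.
  apply wf_of_noseq. intros x Hx.
  assert (Hd : forall k n, n < k -> le (x k) (x n) /\ x k <> x n).
  { induction k; intros n Hn; [lia|].
    destruct (Nat.eq_dec n k) as [ ->|Hne]; [exact (Hx k)|].
    destruct (IHk n ltac:(lia)) as [H1 H2]. destruct (Hx k) as [H3 H4].
    split; [eauto|]. intro Heq. apply H2. apply antis; auto. rewrite <- Heq. auto. }
  apply (nofin x).
  - intros n k. destruct (lt_eq_lt_dec n k) as [[Hl| ->]|Hl].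
    + right; apply Hd; auto.
    + left; apply refl.
    + left; apply Hd; auto.
  - intros n k Heq. destruct (lt_eq_lt_dec n k) as [[Hl| ->]|Hl]; auto;
      exfalso; [destruct (Hd k n Hl)|destruct (Hd n k Hl)]; auto.
Qed.

Definition slt (E : Semigroup) (a b : E) : Prop := sle E a b /\ a <> b.

Lemma wf_slt (E : Semigroup) (hE : is_semilattice E) (hEf : chain_finite E) :
  well_founded (slt E).
Proof.
  apply (wf_gen (sle E)).
  - apply sle_refl; auto.
  - apply sle_trans.
  - apply sle_antisym; auto.
  - apply comparable_seq_false; auto.
Qed.

Lemma wf_sgt (E : Semigroup) (hE : is_semilattice E) (hEf : chain_finite E) :
  well_founded (fun a b => slt E b a).
Proof.
  assert (H : well_founded (fun a b => sle E b a /\ a <> b)).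
  { apply (wf_gen (fun a b => sle E b a)).
    - intros; apply sle_refl; auto.
    - intros a b c H1 H2. apply sle_trans with b; auto.
    - intros a b H1 H2. apply sle_antisym; auto.
    - intros x Hc Hi. apply (comparable_seq_false E hE hEf x); auto. }
  intro a. induction (H a) as [a _ IH]. constructor. intros b [Hb1 Hb2].
  apply IH. split; auto.
Qed.

Lemma exists_max {T : Type} (R : T -> T -> Prop) (wf : well_founded R)
  (P : T -> Prop) (a : T) : P a -> exists g, P g /\ forall w, P w -> ~ R w g.
Proof.
  induction (wf a) as [a _ IH]. intro Ha.
  destruct (classic (exists w, P w /\ R w a)) as [[w [Hw Hr]]|Hn].
  - exact (IH w Hr Hw).
  - exists a. split; auto. intros w Hw Hr. apply Hn. eauto.
Qed.

Lemma exists_bot (E : Semigroup) (hE : is_semilattice E) (hEf : chain_finite E) (e0 : E) :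
  exists m0, forall b, sle E m0 b.
Proof.
  destruct (exists_max (slt E) (wf_slt E hE hEf) (fun _ => True) e0 I) as [m0 [_ Hm]].
  exists m0. intro b. unfold sle. apply NNPP. intro Hne.
  apply (Hm (sg_mul E m0 b) I). split; auto. apply sle_mul_l; auto.
Qed.

Lemma open_full (Y : TopSemigroup) : ts_open Y (fun _ => True).
Proof. exact (proj1 (ts_topology Y)). Qed.

Lemma open_inter (Y : TopSemigroup) (U V : Y -> Prop) :
  ts_open Y U -> ts_open Y V -> ts_open Y (fun x => U x /\ V x).
Proof. apply (proj2 (proj2 (ts_topology Y))). Qed.

Lemma open_local (Y : TopSemigroup) (P : Y -> Prop) :
  (forall z, P z -> exists U, ts_open Y U /\ U z /\ forall w, U w -> P w) -> ts_open Y P.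
Proof.
  intros H. destruct (ts_topology Y) as [_ [Hun _]].
  pose (I := {U : Y -> Prop | ts_open Y U /\ forall w, U w -> P w}).
  specialize (Hun I (fun i => proj1_sig i) (fun i => proj1 (proj2_sig i))).
  replace P with (fun x => exists i : I, proj1_sig i x); auto.
  apply functional_extensionality; intro x; apply propositional_extensionality; split.
  - intros [[U [HU HUP]] Hx]. simpl in Hx. exact (HUP x Hx).
  - intro Hx. destruct (H x Hx) as [U [HU [HUx HUP]]].
    exists (exist _ U (conj HU HUP)). exact HUx.
Qed.

Definition mu (X E : Semigroup) (h : X -> E) (c : option X) (t : E) : E :=
  match c with None => t | Some a => sg_mul E (h a) t end.
Definition phi (X : Semigroup) (Y : TopSemigroup) (f : X -> Y) (c : option X) (z : Y) : Y :=
  match c with None => z | Some a => ts_mul Y (f a) z end.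
Definition word (X : Semigroup) (c : option X) (x : X) : X :=
  match c with None => x | Some a => sg_mul X a x end.

Lemma cont2 (X : Semigroup) (Y : TopSemigroup) (f : X -> Y) (c : option X) (z z' : Y)
  (W : Y -> Prop) : ts_open Y W -> W (phi X Y f c (ts_mul Y z z')) ->
  exists U V, ts_open Y U /\ ts_open Y V /\ U z /\ V z' /\
    forall w w', U w -> V w' -> W (phi X Y f c (ts_mul Y w w')).
Proof.
  intros HW Hz. destruct c as [a|]; simpl in *.
  - destruct (ts_mul_cont Y (f a) (ts_mul Y z z') W HW Hz) as [U1 [V1 [HU1 [HV1 [Ha [Hzz HUV]]]]]].
    destruct (ts_mul_cont Y z z' V1 HV1 Hzz) as [U [V [HU [HV [Hu [Hv HUV2]]]]]].
    exists U, V; repeat split; auto.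
  - exact (ts_mul_cont Y z z' W HW Hz).
Qed.

Definition ltO (X E : Semigroup) (h : X -> E) (d c : option X) : Prop :=
  match d, c with
  | Some a, None => True
  | Some a, Some b => slt E (h a) (h b)
  | _, _ => False
  end.

Lemma wf_ltO (X E : Semigroup) (hE : is_semilattice E) (hEf : chain_finite E) (h : X -> E) :
  well_founded (ltO X E h).
Proof.
  assert (HS : forall a, Acc (ltO X E h) (Some a)).
  { intro a. remember (h a) as e eqn:He. revert a He.
    induction (wf_slt E hE hEf e) as [e _ IH]. intros a He. constructor.
    intros [d|] Hd; simpl in Hd; [|contradiction]. subst. eapply IH; eauto. }
  intros [a|]; auto. constructor. intros [d|] Hd; simpl in Hd; auto. contradiction.
Qed.

Lemma core (X E : Semigroup) (hE : is_semilattice E) (hEf : chain_finite E)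
  (h : X -> E) (hh : sg_hom X E h) (Y : TopSemigroup) (f : X -> Y)
  (Hhom : forall x y, f (sg_mul X x y) = ts_mul Y (f x) (f y))
  (Hdisc : forall x0, exists O, ts_open Y O /\ O (f x0) /\ forall x, O (f x) -> x = x0)
  (Hfib : forall e z, (forall W, ts_open Y W -> W z -> exists x, h x = e /\ W (f x)) ->
          exists x, h x = e /\ f x = z)
  (y : Y) (Hadh : forall U, ts_open Y U -> U y -> exists x, U (f x)) :
  exists x, f x = y.
Proof.
  assert (Hfw : forall c x, f (word X c x) = phi X Y f c (f x)).
  { intros [a|] x; simpl; auto. }
  assert (Hhw : forall c x, h (word X c x) = mu X E h c (h x)).
  { intros [a|] x; simpl; auto. }
  assert (Hmuassoc : forall c s t, mu X E h c (sg_mul E s t) = sg_mul E (mu X E h c s) t).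
  { intros [a|] s t; simpl; auto. apply sg_assoc. }
  assert (Hmuidem : forall c t, mu X E h c (sg_mul E t t) = mu X E h c t).
  { intros c t. rewrite (proj2 hE). reflexivity. }
  assert (Hmuinv : forall c g t, sle E g (mu X E h c t) -> sle E g t).
  { intros [a|] g t H; simpl in H; auto. eapply sle_mul_inv; eauto. }
  assert (Hmule : forall c s t, sle E (sg_mul E (mu X E h c s) t) (mu X E h c t)).
  { intros [a|] s t; simpl.
    - apply sle_glb.
      + apply sle_trans with (sg_mul E (h a) s); apply sle_mul_l; auto.
      + apply sle_mul_r; auto.
    - apply sle_mul_r; auto. }
  pose (K := fun c => exists U v, ts_open Y U /\ U y /\
                        forall b, U (f b) -> mu X E h c (h b) = v).
  assert (HK : forall c, K c).
  { intro c. induction (wf_ltO X E hE hEf h c) as [c _ IH].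
    pose (S := fun u => forall W, ts_open Y W -> W y ->
                 exists b, W (f b) /\ sle E u (mu X E h c (h b))).
    destruct (Hadh _ (open_full Y) I) as [b0 _].
    destruct (exists_bot E hE hEf (h b0)) as [m0 Hm0].
    assert (HS0 : S m0).
    { intros W HW HWy. destruct (Hadh W HW HWy) as [b Hb]. exists b; auto. }
    destruct (exists_max _ (wf_sgt E hE hEf) S m0 HS0) as [g [HSg Hmax]].
    assert (Hmax' : forall w, S w -> sle E g w -> w = g).
    { intros w Hw Hgw. apply NNPP; intro Hne. apply (Hmax w Hw). split; auto. }
    assert (Hcase2 : forall Uc, ts_open Y Uc -> Uc y ->
              (forall b, Uc (f b) -> ltO X E h (Some (word X c b)) c) ->
              forall W, ts_open Y W -> W (phi X Y f c (ts_mul Y y y)) ->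
              exists x, h x = g /\ W (f x)).
    { intros Uc HUc HUcy HUclt W HW HWP.
      destruct (cont2 X Y f c y y W HW HWP) as [U2 [V2 [HU2 [HV2 [HU2y [HV2y HUV]]]]]].
      destruct (HSg (fun z => U2 z /\ Uc z) (open_inter Y _ _ HU2 HUc) (conj HU2y HUcy))
        as [b [[HU2b HUcb] Hgb]].
      destruct (IH (Some (word X c b)) (HUclt b HUcb)) as [Ub [v [HUbo [HUby HUb]]]].
      simpl in HUb. rewrite Hhw in HUb.
      assert (Hv : v = g).
      { apply Hmax'.
        - intros W' HW' HW'y.
          destruct (Hadh (fun z => W' z /\ Ub z) (open_inter Y _ _ HW' HUbo) (conj HW'y HUby))
            as [b'' [HW'b HUbb]].
          exists b''. split; auto. rewrite <- (HUb b'' HUbb). apply Hmule.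
        - destruct (HSg Ub HUbo HUby) as [b1 [Hb1 Hgb1]].
          rewrite <- (HUb b1 Hb1). apply sle_glb; auto. eapply Hmuinv; eauto. }
      destruct (Hadh (fun z => V2 z /\ Ub z) (open_inter Y _ _ HV2 HUbo) (conj HV2y HUby))
        as [b' [HV2b HUbb']].
      exists (word X c (sg_mul X b b')). split.
      - rewrite Hhw, hh, Hmuassoc, HUb; auto.
      - rewrite Hfw, Hhom. apply HUV; auto. }
    assert (Hfibg : exists x0, h x0 = g /\ f x0 = phi X Y f c (ts_mul Y y y)).
    { apply Hfib. destruct c as [a|].
      - destruct (classic (h a = g)) as [Hag|Hag].
        + intros W HW HWP.
          destruct (cont2 X Y f (Some a) y y W HW HWP) as [U2 [V2 [HU2 [HV2 [HU2y [HV2y HUV]]]]]].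
          destruct (HSg U2 HU2 HU2y) as [b [Hb Hgb]].
          destruct (HSg V2 HV2 HV2y) as [b' [Hb' Hgb']].
          simpl in Hgb, Hgb'. rewrite <- Hag in Hgb, Hgb'.
          apply sle_self_mul in Hgb; auto. apply sle_self_mul in Hgb'; auto.
          exists (word X (Some a) (sg_mul X b b')). split.
          * rewrite Hhw, hh. simpl. rewrite sg_assoc, Hgb, Hgb'. exact Hag.
          * rewrite Hfw, Hhom. apply HUV; auto.
        + assert (HnS : ~ S (h a)).
          { intro HSa. apply Hag. apply Hmax'; auto.
            destruct (HSg _ (open_full Y) I) as [b1 [_ Hb1]]. simpl in Hb1.
            apply sle_trans with (sg_mul E (h a) (h b1)); auto. apply sle_mul_l; auto. }
          unfold S in HnS.
          apply not_all_ex_not in HnS. destruct HnS as [W' HnS].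
          apply imply_to_and in HnS. destruct HnS as [HW' HnS].
          apply imply_to_and in HnS. destruct HnS as [HW'y HnS].
          apply (Hcase2 W' HW' HW'y). intros b Hb. simpl. rewrite hh. split.
          * apply sle_mul_l; auto.
          * intro Heq. apply HnS. exists b. split; auto. simpl. rewrite Heq.
            unfold sle. apply (proj2 hE).
      - apply (Hcase2 (fun _ => True) (open_full Y) I). intros; simpl; exact I. }
    destruct Hfibg as [x0 [Hx0g Hx0]].
    destruct (Hdisc x0) as [O [HO [HOx0 HOx]]].
    rewrite Hx0 in HOx0.
    destruct (cont2 X Y f c y y O HO HOx0) as [U [V [HU [HV [HUy [HVy HUV]]]]]].
    exists (fun z => U z /\ V z), g. split; [apply open_inter; auto|]. split; [auto|].
    intros b [HUb HVb].
    assert (Hw : word X c (sg_mul X b b) = x0).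
    { apply HOx. rewrite Hfw, Hhom. apply HUV; auto. }
    rewrite <- Hmuidem, <- hh, <- Hhw, Hw. exact Hx0g. }
  destruct (HK None) as [U [v [HU [HUy HUv]]]].
  destruct (Hfib v y) as [x [_ Hx]]; [|exists x; exact Hx].
  intros W HW HWy.
  destruct (Hadh (fun z => W z /\ U z) (open_inter Y _ _ HW HU) (conj HWy HUy)) as [x [HWx HUx]].
  exists x. split; auto. apply HUv in HUx. exact HUx.
Qed.

Theorem theorem1p4 (C : TopSemigroup -> Prop)
  (hzC : forall Y, in_TzS Y -> C Y) (hC1 : forall Y, C Y -> in_T1S Y)
  (X E : Semigroup) (hE : is_semilattice E) (hEf : chain_finite E)
  (h : X -> E) (hh : sg_hom X E h)
  (hfib : forall e : E, sg_C_closed C (preimage_sg X E h hh e (proj2 hE e))) :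
  sg_C_closed C X.
Proof.
  unfold sg_C_closed, C_closed. intros Y HCY f Hemb.
  destruct Hemb as [Hhom [Hinj [_ Hop]]].
  assert (Hhom' : forall x y : X, f (sg_mul X x y) = ts_mul Y (f x) (f y)) by exact Hhom.
  assert (Hdisc : forall x0 : X, exists O, ts_open Y O /\ O (f x0) /\ forall x : X, O (f x) -> x = x0).
  { intro x0. destruct (Hop (fun x => x = x0) I) as [V [HV HVx]].
    exists V; split; auto. split; [apply HVx; reflexivity|]. intros x Hx; apply HVx; auto. }
  assert (Hfib : forall e z, (forall W, ts_open Y W -> W z -> exists x : X, h x = e /\ W (f x)) ->
          exists x : X, h x = e /\ f x = z).
  { intros e z Hz.
    pose (S := preimage_sg X E h hh e (proj2 hE e)).
    pose (fe := fun s : discrete_ts S => f (proj1_sig s)).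
    assert (Hembe : ts_embedding (discrete_ts S) Y fe).
    { split; [|split; [|split]].
      - intros [s Hs] [t Ht]. exact (Hhom' s t).
      - intros [s Hs] [t Ht] Heq. apply Hinj in Heq. simpl in Heq. subst.
        f_equal. apply proof_irrelevance.
      - intros; exact I.
      - intros U _. destruct (Hop (fun x => exists s : S, proj1_sig s = x /\ U s) I)
          as [V [HV HVx]].
        exists V; split; auto. intros s; split; intro H.
        + apply HVx. exists s; auto.
        + apply HVx in H. destruct H as [s' [Heq HU]].
          replace s with s'; auto. destruct s' as [s' Hs'], s as [s Hs]. simpl in Heq.
          subst. f_equal. apply proof_irrelevance. }
    pose proof (hfib e Y HCY fe Hembe) as Hcl. unfold ts_closed in Hcl.
    apply NNPP; intro Hno.
    destruct (Hz _ Hcl) as [x [Hxe Hx]].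
    - intros [s Hs]. apply Hno. exists (proj1_sig s). split; [exact (proj2_sig s)| exact Hs].
    - apply Hx. exists (exist _ x Hxe). reflexivity. }
  unfold ts_closed. apply open_local. intros y Hy. apply NNPP; intro Hno. apply Hy.
  apply (core X E hE hEf h hh Y f Hhom' Hdisc Hfib y).
  intros U HU HUy. apply NNPP; intro Hn. apply Hno. exists U; repeat split; auto.
  intros w Hw [x Hx]. apply Hn. exists x. subst; auto.
Qed.
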